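(* For all positive integers $m,n$, the diameter of the cyclic simplicial rook graph satisfies $\operatorname{diam}(\mathcal{CSR}(m,n))=m-\left\lfloor \frac{m-1}{n}\right\rfloor-1$.
   Context: For positive integers $m,n$, the cyclic simplicial rook graph $\mathcal{CSR}(m,n)$ is the graph whose vertices are the vectors $(a_1,\dots,a_m)\in\mathbb{Z}_n^m$ with $a_1+\cdots+a_m\equiv 0 \pmod n$, two vertices being adjacent if and only if their vectors differ in exactly two coordinates. *)

(* Defs.v *)
From mathcomp Require Import all_boot.
Set Implicit Arguments. Unset Strict Implicit. Unset Printing Implicit Defensive.

Definition nbhd (T : finType) (e : rel T) (A : {set T}) : {set T} :=
  A :|: [set y | [exists x in A, e x y]].

Definition ball (T : finType) (e : rel T) (k : nat) (x : T) : {set T} :=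
  iter k (nbhd e) [set x].

(* graph distance: least k with y in ball k x (any reachable vertex is at
   distance < #|T|; unreachable pairs get the value #|T|) *)
Definition gdist (T : finType) (e : rel T) (x y : T) : nat :=
  find (fun k => y \in ball e k x) (iota 0 #|T|).

Definition diameter (T : finType) (e : rel T) : nat :=
  \max_(x : T) \max_(y : T) gdist e x y.

Definition csr_vertex (m n : nat) : predArgType :=
  {f : {ffun 'I_m -> 'I_n} | (\sum_(i < m) (f i : nat)) %% n == 0}.

Definition csr_adj (m n : nat) : rel (csr_vertex m n) :=
  fun u v => #|[set i : 'I_m | sval u i != sval v i]| == 2.
Arguments csr_adj m n : clear implicits.

(* Main.v *)
Require Import Defs.
From mathcomp Require Import all_boot all_algebra.
From mathcomp Require Import zify.
Set Implicit Arguments. Unset Strict Implicit. Unset Printing Implicit Defensive.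
Import GRing.Theory.

Section Balls.
Variables (T : finType) (e : rel T).

Lemma ballS k x : ball e k.+1 x = nbhd e (ball e k x).
Proof. by rewrite /ball iterS. Qed.

Lemma ball0 x : ball e 0 x = [set x].
Proof. by []. Qed.

Lemma ball_sub k x : ball e k x \subset ball e k.+1 x.
Proof. by rewrite ballS /nbhd subsetUl. Qed.

Lemma ball_mono k l x : k <= l -> ball e k x \subset ball e l x.
Proof.
move=> /subnK <-; elim: (l - k) => [|j IH] //=.
by apply: subset_trans IH (ball_sub _ _).
Qed.

Lemma ball_edge k x y z : y \in ball e k x -> e y z -> z \in ball e k.+1 x.
Proof.
move=> Hy Hz; rewrite ballS /nbhd inE; apply/orP; right.
by rewrite inE; apply/existsP; exists y; rewrite Hy.
Qed.

Lemma ball_concat a b x y z :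
  y \in ball e a x -> z \in ball e b y -> z \in ball e (a + b) x.
Proof.
move=> Hy; elim: b z => [|b IH] z.
  by rewrite ball0 inE => /eqP ->; rewrite addn0.
rewrite ballS /nbhd inE => /orP[/IH H|].
  by rewrite addnS; apply: (subsetP (ball_sub _ _)).
rewrite inE => /existsP[w /andP[Hw Hwz]].
by rewrite addnS; apply: ball_edge (IH _ Hw) Hwz.
Qed.

Lemma gdist_le k x y : y \in ball e k x -> gdist e x y <= k.
Proof.
move=> H; rewrite /gdist; case: (ltnP k #|T|) => Hk.
  rewrite leqNgt; apply/negP => /(before_find 0).
  by rewrite nth_iota // H.
by apply: leq_trans (find_size _ _) _; rewrite size_iota.
Qed.

Lemma ball_stat k x : ball e k.+1 x = ball e k x ->
  forall j, ball e (j + k) x = ball e k x.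
Proof.
move=> H; elim=> [|j IH] //; by rewrite addSn ballS IH -ballS.
Qed.

Lemma ball_grow D x y : y \in ball e D x -> (forall k, k < D -> y \notin ball e k x) ->
  forall k, k <= D -> k < #|ball e k x|.
Proof.
move=> HD Hk; elim=> [|k IH] Hle.
  by rewrite ball0 cards1.
have IH' := IH (ltnW Hle).
have Hs := ball_sub k x.
rewrite ltnNge; apply/negP => Hc.
have Heq : ball e k.+1 x = ball e k x.
  apply/eqP; rewrite eq_sym eqEcard Hs /= -ballS; lia.
have := ball_stat Heq (D - k); rewrite subnK; last by lia.
move=> E; move: HD; rewrite E => HD.
by move: (Hk k (leq_trans (ltnSn k) Hle)); rewrite HD.
Qed.

Lemma gdist_ge D x y : y \in ball e D x -> (forall k, k < D -> y \notin ball e k x) ->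
  D <= gdist e x y.
Proof.
move=> HD Hk; rewrite /gdist.
set P := (fun k => y \in ball e k x).
case: (ltnP (find P (iota 0 #|T|)) #|T|) => Hf.
  have Hh : has P (iota 0 #|T|) by rewrite has_find size_iota.
  have := nth_find 0 Hh; rewrite nth_iota // add0n /P.
  case: (ltnP (find P (iota 0 #|T|)) D) => // /Hk.
  by move=> /negPf ->.
have := ball_grow HD Hk (leqnn D) => H1.
have H2 : #|ball e D x| <= #|T| by apply: max_card.
lia.
Qed.

End Balls.

Section Z.
Variables (m p : nat).
Local Notation N := p.+2.
Local Notation V := (csr_vertex m N).
Local Open Scope ring_scope.

Lemma val_sumZ (f : 'I_m -> 'I_N) : nat_of_ord (\sum_i f i) = ((\sum_i (f i : nat)) %% N)%N.
Proof.
apply: (big_rec2 (fun (a : nat) (b : 'I_N) => nat_of_ord b = (a %% N)%N)) => //.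
move=> i a b _ H.
by rewrite -modnDmr -H.
Qed.

Lemma sumZp (f : {ffun 'I_m -> 'I_N}) :
  ((\sum_i (f i : nat)) %% N == 0)%N = (\sum_i f i == 0).
Proof. by rewrite -val_sumZ. Qed.

Lemma vsum0 (x : V) : \sum_i (sval x) i = 0.
Proof. by apply/eqP; rewrite -sumZp; case: x. Qed.

Definition mkV (f : {ffun 'I_m -> 'I_N}) (H : \sum_i f i = 0) : V :=
  exist _ f (etrans (sumZp f) (introT eqP H)).

Lemma mkVE f H : sval (@mkV f H) = f. Proof. by []. Qed.

End Z.

Section Low.
Variables (m p : nat).
Local Notation N := p.+2.
Local Notation V := (csr_vertex m N).
Local Open Scope ring_scope.

Lemma adj_diff (z w : V) : csr_adj m N z w ->
  exists i j, i != j /\ forall t, t != i -> t != j -> sval z t = sval w t.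
Proof.
rewrite /csr_adj => /cards2P[i [j [Hij HS]]].
exists i, j; split => // t Hi Hj.
apply/eqP; apply: contraNT (Hj) => H.
have : t \in [set i0 | sval z i0 != sval w i0] by rewrite inE.
by rewrite HS !inE (negPf Hi).
Qed.

Lemma blocksum (z w : V) i j (A : pred 'I_m) :
  (forall t, t != i -> t != j -> sval z t = sval w t) ->
  A i = A j -> \sum_(t | A t) sval w t = \sum_(t | A t) sval z t.
Proof.
move=> Hd HA.
case Ai: (A i).
  have Ew := vsum0 w; have Ez := vsum0 z.
  rewrite (bigID A) /= in Ew; rewrite (bigID A) /= in Ez.
  have E : \sum_(t | ~~ A t) sval w t = \sum_(t | ~~ A t) sval z t.
    apply: eq_bigr => t Ht; symmetry; apply: Hd; apply: contraNneq Ht => ->.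
      by rewrite Ai.
    by rewrite -HA Ai.
  apply: (addIr (\sum_(t | ~~ A t) sval z t)).
  by rewrite Ez -E Ew.
apply: eq_bigr => t Ht; symmetry; apply: Hd; apply: contraTneq Ht => ->.
  by rewrite Ai.
by rewrite -HA Ai.
Qed.

Lemma x0_sum : \sum_i ([ffun=> 0] : {ffun 'I_m -> 'I_N}) i = 0.
Proof. by apply: big1 => i _; rewrite ffunE. Qed.
Definition x0 : V := @mkV m p [ffun=> 0] x0_sum.

Lemma inv_ball k (z : V) : z \in ball (csr_adj m N) k x0 ->
  exists lab : 'I_m -> 'I_m, (forall c, \sum_(t | lab t == c) sval z t = 0)
     /\ (m <= k + #|lab @: [set: 'I_m]|)%N.
Proof.
elim: k z => [|k IH] z.
  rewrite ball0 inE => /eqP ->; exists id; split.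
    by move=> c; apply: big1 => t _; rewrite /= ffunE.
  by rewrite card_imset // cardsT card_ord.
rewrite ballS /nbhd inE => /orP[/IH[lab [H1 H2]]|].
  by exists lab; split => //; rewrite addSn; lia.
rewrite inE => /existsP[w /andP[/IH[lab [H1 H2]] Hadj]].
have [i [j [Hij Hd]]] := adj_diff Hadj.
pose lab' t := if lab t == lab j then lab i else lab t.
exists lab'; split.
  move=> c; rewrite (blocksum (A := fun t => lab' t == c) Hd); last first.
    by rewrite /lab' eqxx; case: ifP.
  rewrite (bigID (fun t => lab t == lab j)) /=.
  rewrite [X in X + _](_ : _ = 0); last first.
    case Hc: (lab i == c).
      apply: etrans (H1 (lab j)); apply: eq_bigl => t.
      by rewrite /lab'; case: ifP; rewrite ?Hc ?andbT ?andbF.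
    apply: big_pred0 => t; rewrite /lab'; case: ifP; rewrite ?Hc ?andbT ?andbF //.
  rewrite add0r.
  case Hc: (c == lab j).
    apply: big_pred0 => t; rewrite /lab'; case: ifP => H; rewrite ?andbF ?andbT //.
    by apply/negbTE; rewrite (eqP Hc) H.
  apply: etrans (H1 c); apply: eq_bigl => t; rewrite /lab'; case: ifP => H; rewrite ?andbF ?andbT //.
  by rewrite (eqP H) eq_sym Hc.
have Hsub : lab @: [set: 'I_m] \subset lab j |: (lab' @: [set: 'I_m]).
  apply/subsetP => c /imsetP[t _ ->]; rewrite !inE.
  case E: (lab t == lab j) => //=.
  by apply/imsetP; exists t; rewrite ?inE // /lab' E.
have := subset_leq_card Hsub; rewrite cardsU1.
case: (lab j \notin _) => /= H3; apply: (leq_trans H2); rewrite addSn -addnS leq_add2l; [exact H3 | exact: leqW H3].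
Qed.

End Low.

Section Y0.
Variables (m' p : nat).
Local Notation m := m'.+1.
Local Notation N := p.+2.
Local Notation V := (csr_vertex m N).
Local Open Scope ring_scope.

Definition Y0 : {ffun 'I_m -> 'I_N} :=
  [ffun t => if t == ord_max then - (m'%:R) else 1].

Lemma Y0_sum : \sum_i Y0 i = 0.
Proof.
rewrite (bigD1 ord_max) //= ffunE eqxx.
rewrite (eq_bigr (fun _ => 1)); last by move=> t Ht; rewrite ffunE (negPf Ht).
rewrite sumr_const cardC1 card_ord /=.
by rewrite addNr.
Qed.

Definition y0 : V := @mkV m p Y0 Y0_sum.

Lemma y0_bound (lab : 'I_m -> 'I_m) :
  (forall c, \sum_(t | lab t == c) Y0 t = 0) ->
  (#|lab @: [set: 'I_m]| <= (m' %/ N).+1)%N.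
Proof.
move=> Hs.
set L' := lab ord_max.
set im := lab @: [set: 'I_m].
have Hblk : forall c, c != L' -> c \in im -> (N <= #|[set t | lab t == c]|)%N.
  move=> c HcL /imsetP[t0 _ Ht0].
  have E : \sum_(t | lab t == c) Y0 t = (#|[set t | lab t == c]|)%:R.
    rewrite (eq_bigr (fun _ => 1)); last first.
      move=> t Ht; rewrite ffunE; case: eqP => // Et.
      by move: Ht HcL; rewrite Et /L' => /eqP ->; rewrite eqxx.
    rewrite sumr_const; congr (_ *+ _); apply: eq_card => t; by rewrite inE.
  have := Hs c; rewrite E => /(congr1 (@nat_of_ord _)).
  rewrite (@val_Zp_nat N isT) => /eqP; rewrite -/(dvdn _ _) => Hd.
  apply: dvdn_leq => //.
  by apply/card_gt0P; exists t0; rewrite inE Ht0.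
have S1 : (\sum_(c | c != L') #|[set t | lab t == c]| = #|[set t | lab t != L']|)%N.
  rewrite -sum1_card.
  rewrite [RHS](eq_bigl (fun t => lab t != L')); last by move=> t; rewrite inE.
  rewrite [RHS](partition_big lab (fun c => c != L')) //=.
  apply: eq_bigr => c Hc; rewrite -sum1_card; apply: eq_bigl => t.
  rewrite inE; case: eqP => [->|]; rewrite ?andbT ?andbF //.
have S2 : (#|[set t | lab t != L']| <= m')%N.
  have : [set t | lab t != L'] \subset [set~ ord_max].
    by apply/subsetP => t; rewrite !inE; apply: contraNneq => ->.
  by move/subset_leq_card; rewrite cardsC1 card_ord.
have S3 : (#|im :\ L'| * N <= \sum_(c | c != L') #|[set t | lab t == c]|)%N.
  rewrite -sum_nat_const.
  apply: leq_trans (_ : (\sum_(c | c != L') (if c \in im then N else 0) <= _)%N).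
    rewrite [X in (_ <= X)%N]big_mkcond [X in (X <= _)%N]big_mkcond /=.
    apply: leq_sum => c _; rewrite in_setD1; case: (c != L'); case: (c \in im) => //.
  apply: leq_sum => c Hc; case: ifP => // Hi; exact: Hblk.
have S4 := cardsD1 L' im.
have S5 : (#|im :\ L'| <= m' %/ N)%N.
  rewrite leq_divRL //; lia.
move: S4 S5; case: (L' \in im) => /=; lia.
Qed.

Lemma lower k : y0 \in ball (csr_adj m N) k (x0 m p) -> (m' - m' %/ N <= k)%N.
Proof.
move=> /inv_ball[lab [H1 H2]].
have := y0_bound H1; lia.
Qed.

End Y0.

Section Dav.
Variables (m p : nat).
Local Notation N := p.+2.
Local Open Scope ring_scope.

Lemma daven (d : 'I_m -> 'I_N) (B : {set 'I_m}) : (N <= #|B|)%N ->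
  exists U : {set 'I_m}, [/\ U \subset B, U != set0,
     \sum_(k in U) d k == 0 & (#|U| <= N)%N].
Proof.
move=> HB.
set s := enum B.
have Hs : size s = #|B| by rewrite /s -cardE.
pose P (k : 'I_N.+1) : 'I_N := \sum_(t <- take k s) d t.
have key : forall a b : 'I_N.+1, (a < b)%N -> P a = P b -> exists U : {set 'I_m}, [/\ U \subset B, U != set0,
     \sum_(k in U) d k == 0 & (#|U| <= N)%N].
  move=> a b Hab HP.
  set r := drop a (take b s).
  have Hb : (b <= N)%N by rewrite -ltnS.
  have Hsz : size r = (b - a)%N by rewrite size_drop size_takel // Hs; lia.
  exists [set t | t \in r]; split.
  - apply/subsetP => t; rewrite inE => /mem_drop /mem_take.
    by rewrite /s mem_enum.
  - case E: r Hsz => [|t r'] /=; first by lia.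
    by move=> _; apply/set0Pn; exists t; rewrite inE mem_head.
  - have Hu : uniq r by rewrite drop_uniq // take_uniq // enum_uniq.
    rewrite (eq_bigl (fun t => t \in r)); last by move=> t; rewrite inE.
    rewrite -big_uniq //.
    have : P b = P a + \sum_(t <- r) d t.
      by rewrite /P -{1}(cat_take_drop a (take b s)) big_cat /= take_takel // ltnW.
    rewrite -HP -{1}(addr0 (P a)) => /addrI <-.
    by [].
  - have -> : #|[set t | t \in r]| = #|r| by apply: eq_card => t; rewrite inE.
    have := card_size r; rewrite Hsz => H1.
    apply: leq_trans H1 _; lia.
have : ~~ injectiveb P.
  apply/negP => /injectiveP Hinj.
  by have := leq_card P Hinj; rewrite !card_ord ltnn.
case/injectivePn => a [b Hab HP].
case: (ltngtP a b) => H.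
- exact: key H HP.
- exact: key H (esym HP).
- by move: Hab; rewrite (val_inj H) eqxx.
Qed.

End Dav.

Section Up.
Variables (m p : nat).
Local Notation N := p.+2.
Local Notation V := (csr_vertex m N).
Local Notation e := (csr_adj m N).
Local Open Scope ring_scope.

Definition Sxy (x y : V) : {set 'I_m} := [set i | sval x i != sval y i].
Definition zs (x y : V) (U : {set 'I_m}) := \sum_(i in U) (sval y i - sval x i) == 0.

Lemma sum_if1 (A : pred 'I_m) i (c : 'I_N) :
  \sum_(k | A k) (if k == i then c else 0) = if A i then c else 0.
Proof.
case Ai: (A i).
  rewrite (bigD1 i) //= eqxx big1 ?addr0 // => k /andP[_ /negPf->] //.
by apply: big1 => k Ak; case: eqP => // Eki; move: Ak; rewrite Eki Ai.
Qed.

Lemma Sfull (x y : V) : zs x y (Sxy x y).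
Proof.
rewrite /zs.
have E : \sum_i (sval y i - sval x i) = 0 by rewrite sumrB !vsum0 subrr.
rewrite (bigID (fun i => i \in Sxy x y)) /= in E.
rewrite [X in _ + X = _]big1 ?addr0 in E; first by rewrite E.
by move=> i; rewrite inE negbK => /eqP ->; rewrite subrr.
Qed.

Lemma S0_eq (x y : V) : Sxy x y = set0 -> x = y.
Proof.
move=> H; apply: val_inj; apply/ffunP => i; apply/eqP.
have : i \notin Sxy x y by rewrite H inE.
by rewrite inE negbK.
Qed.

Lemma chain s : forall x y : V, #|Sxy x y| = s.+2 ->
  (forall U : {set 'I_m}, U \proper Sxy x y -> U != set0 -> ~~ zs x y U) ->
  y \in ball e s.+1 x.
Proof.
elim: s => [|s IH] x y Hc Hmin.
  apply: (ball_edge (y := x)); first by rewrite ball0 inE.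
  by rewrite /csr_adj; rewrite /Sxy in Hc; rewrite Hc.
set X := sval x; set Y := sval y.
have [i Hi] : exists i, i \in Sxy x y by apply/card_gt0P; rewrite Hc.
have [j Hj] : exists j, j \in Sxy x y :\ i.
  by apply/card_gt0P; move: (cardsD1 i (Sxy x y)); rewrite Hi Hc; lia.
have Hij : j != i by move: Hj; rewrite in_setD1 => /andP[].
have HjS : j \in Sxy x y by move: Hj; rewrite in_setD1 => /andP[].
pose X' : {ffun 'I_m -> 'I_N} :=
  [ffun k => if k == i then Y i else if k == j then X j + (X i - Y i) else X k].
have Hdiff : forall k, X' k - X k =
    (if k == i then Y i - X i else 0) + (if k == j then X i - Y i else 0).
  move=> k; rewrite ffunE.
  case: (eqVneq k i) => [->|Hki]; first by rewrite eq_sym (negPf Hij) addr0.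
  case: (eqVneq k j) => [->|Hkj]; first by rewrite add0r addrAC subrr add0r.
  by rewrite subrr addr0.
have Hsd : forall A : pred 'I_m, \sum_(k | A k) (X' k - X k) =
    (if A i then Y i - X i else 0) + (if A j then X i - Y i else 0).
  move=> A; rewrite (eq_bigr _ (fun k _ => Hdiff k)) big_split /=.
  by rewrite !sum_if1.
have HX' : \sum_k X' k = 0.
  have E := Hsd (fun _ => true).
  rewrite sumrB vsum0 subr0 /= in E.
  by rewrite E -[X i - Y i]opprB addrN.
pose x' := @mkV m p X' HX'.
have Hdij : Y i - X i + (Y j - X j) != 0.
  have Hp : [set i; j] \proper Sxy x y.
    rewrite properEcard; apply/andP; split.
      by apply/subsetP => k; rewrite in_set2 => /orP[] /eqP ->.
    by rewrite cards2 eq_sym Hij Hc.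
  have := Hmin _ Hp; rewrite /zs.
  rewrite big_setU1 /=; last by rewrite inE eq_sym.
  rewrite big_set1 => H; apply: H.
  apply/set0Pn; exists i; by rewrite !inE eqxx.
have HS' : Sxy x' y = Sxy x y :\ i.
  apply/setP => k; rewrite !inE /x' mkVE ffunE.
  case: (eqVneq k i) => [->|Hki]; first by rewrite eqxx.
  case: (eqVneq k j) => [->|Hkj].
    have HjS' : sval x j != sval y j by move: HjS; rewrite /Sxy in_set.
    rewrite HjS'.
    apply/eqP => E1; move/eqP: Hdij; apply.
    by rewrite -E1 [X j + _]addrC addrK -[X i - Y i]opprB subrr.
  by [].
have HiS : sval x i != sval y i by move: Hi; rewrite /Sxy in_set.
have Hc' : #|Sxy x' y| = s.+2.
  rewrite HS'; move: (cardsD1 i (Sxy x y)); rewrite Hi Hc add1n; by case.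
have Hmin' : forall U : {set 'I_m}, U \proper Sxy x' y -> U != set0 -> ~~ zs x' y U.
  move=> U; rewrite HS' => HU HU0.
  have HUsub : U \subset Sxy x y :\ i := proper_sub HU.
  have HUS : U \subset Sxy x y.
    by apply: subset_trans HUsub _; apply/subsetP => k; rewrite in_setD1 => /andP[].
  have HiU : i \notin U.
    by apply/negP => /(subsetP HUsub); rewrite in_setD1 eqxx.
  have HcU := proper_card HU.
  have HcS := cardsD1 i (Sxy x y); rewrite Hi in HcS.
  have Ek : forall k, Y k - X' k = (Y k - X k) - (X' k - X k).
    by move=> k; rewrite opprB addrA subrK.
  rewrite /zs mkVE (eq_bigr _ (fun k _ => Ek k)) sumrB (Hsd (fun k => k \in U)) (negPf HiU) add0r.
  case HjU: (j \in U).
    have Hp : i |: U \proper Sxy x y.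
      rewrite properEcard; apply/andP; split.
        by apply/subsetP => k; rewrite in_setU1 => /orP[/eqP ->|/(subsetP HUS)].
      by rewrite cardsU1 HiU add1n HcS add1n.
    have := Hmin _ Hp; rewrite /zs big_setU1 //=.
    rewrite -[X i - Y i]opprB opprK addrC.
    apply; apply/set0Pn; exists i; by rewrite in_setU1 eqxx.
  have Hp : U \proper Sxy x y.
    rewrite properEcard HUS /= HcS add1n; exact: ltnW.
  rewrite subr0; exact: Hmin _ Hp HU0.
have Hy := IH x' y Hc' Hmin'.
have Hadj : e x x'.
  rewrite /csr_adj.
  have -> : [set k | sval x k != sval x' k] = [set i; j].
    apply/setP => k; rewrite in_set in_set2 mkVE ffunE.
    case: (eqVneq k i) => [->|Hki] //.
    case: (eqVneq k j) => [->|Hkj] //; last by rewrite eqxx.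
    apply/eqP => E1; move: HiS; rewrite -subr_eq0.
    have : X j + (X i - Y i) - X j = 0 by rewrite -E1 subrr.
    by rewrite [X j + _]addrC addrK => ->; rewrite eqxx.
  by rewrite cards2 (eq_sym i j) Hij.
have Hx' : x' \in ball e 1 x by apply: (ball_edge (y := x)); [rewrite ball0 inE | exact: Hadj].
exact: (ball_concat Hx' Hy).
Qed.

Local Close Scope ring_scope.
Definition hh (k : nat) : nat := (k - (k + p.+1) %/ N)%N.

Lemma hh_mono k l : (k <= l)%N -> (hh k <= hh l)%N.
Proof.
move=> Hkl; rewrite /hh.
have H : ((l + p.+1) %/ N <= (k + p.+1) %/ N + (l - k))%N.
  rewrite -divnDMl //; apply: leq_div2r; nia.
move: H; generalize ((l + p.+1) %/ N) ((k + p.+1) %/ N) => a b H; lia.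
Qed.

Lemma hh_step b s : (2 <= b)%N -> (b <= N)%N -> (b <= s)%N ->
  (b.-1 + hh (s - b) <= hh s)%N.
Proof.
move=> H2 HN Hs; rewrite /hh.
set c := (s - b)%N.
have Hq1 : ((c + p.+1) %/ N <= c)%N.
  case: c => [|c]; first by rewrite divn_small.
  rewrite -{2}(mulnK c.+1 (isT : (0 < N)%N)); apply: leq_div2r; nia.
have Hq2 : ((s + p.+1) %/ N <= (c + p.+1) %/ N + 1)%N.
  rewrite -divnDMl //; apply: leq_div2r; rewrite /c; lia.
move: Hq1 Hq2; generalize ((s + p.+1) %/ N) ((c + p.+1) %/ N) => a q H1 H3.
rewrite /c in H1 H3 *; lia.
Qed.

Local Open Scope ring_scope.
Lemma upper_gen s : forall x y : V, (#|Sxy x y| <= s)%N ->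
  y \in ball e (hh #|Sxy x y|) x.
Proof.
elim: s => [|s IH] x y Hs.
  have : Sxy x y = set0 by apply/eqP; rewrite -cards_eq0 -leqn0.
  move=> H; rewrite H cards0 (S0_eq H) (_ : hh 0 = 0%N) // ball0 inE; by [].
case: (eqVneq (Sxy x y) set0) => [H|HS0].
  by rewrite H cards0 (S0_eq H) (_ : hh 0 = 0%N) // ball0 inE.
set X := sval x; set Y := sval y.
pose P (U : {set 'I_m}) := [&& U \subset Sxy x y, U != set0 & zs x y U].
have PS : P (Sxy x y) by rewrite /P subxx HS0 Sfull.
case: (@arg_minnP _ (Sxy x y) P (fun U => #|U|) PS) => B /and3P[HBS HB0 HBz] Hmin.
have HB2 : (2 <= #|B|)%N.
  rewrite ltnNge; apply/negP => Hle.
  have : #|B| = 1%N by move: HB0; rewrite -card_gt0; lia.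
  move/eqP/cards1P => [i Ei].
  move: HBz; rewrite /zs Ei big_set1 subr_eq0 => /eqP E.
  have : i \in Sxy x y by apply: (subsetP HBS); rewrite Ei in_set1.
  by rewrite /Sxy in_set E eqxx.
have HBN : (#|B| <= N)%N.
  rewrite leqNgt; apply/negP => HgN.
  have [U [HUB HU0 HUz HUc]] := daven (fun k => sval y k - sval x k) (ltnW HgN).
  have : P U by rewrite /P /zs HU0 HUz (subset_trans HUB HBS).
  move/Hmin => H; lia.
pose Z : {ffun 'I_m -> 'I_N} := [ffun k => if k \in B then Y k else X k].
have HZ : \sum_k Z k = 0.
  have E : \sum_k (Z k - X k) = \sum_(k in B) (Y k - X k).
    rewrite [RHS]big_mkcond /=; apply: eq_bigr => k _; rewrite ffunE.
    by case: (k \in B) => //; rewrite subrr.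
  rewrite sumrB vsum0 subr0 in E.
  by rewrite E; apply/eqP.
pose z := @mkV m p Z HZ.
have HSxz : Sxy x z = B.
  apply/setP => k; rewrite /Sxy in_set mkVE ffunE.
  case HkB: (k \in B); last by rewrite eqxx.
  by have := subsetP HBS k HkB; rewrite /Sxy in_set.
have HSzy : Sxy z y = Sxy x y :\: B.
  apply/setP => k; rewrite in_setD /Sxy !in_set mkVE ffunE.
  by case: (k \in B) => //=; rewrite eqxx.
have Hz : z \in ball e (#|B|.-1) x.
  have -> : #|B|.-1 = (#|B| - 2).+1 by lia.
  apply: chain; first by rewrite HSxz; lia.
  move=> U; rewrite HSxz => HU HU0; apply/negP => HUz.
  have HUB := proper_sub HU.
  have : P U.
    rewrite /P HU0 (subset_trans HUB HBS) /=.
    move: HUz; rewrite /zs mkVE.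
    rewrite (eq_bigr (fun k => Y k - X k)) //.
    by move=> k Hk; rewrite ffunE (subsetP HUB k Hk).
  move/Hmin; have := proper_card HU; lia.
have HcD : #|Sxy z y| = (#|Sxy x y| - #|B|)%N.
  by rewrite HSzy cardsD (setIidPr HBS).
have Hy : y \in ball e (hh (#|Sxy x y| - #|B|)) z.
  rewrite -HcD; apply: IH; rewrite HcD; lia.
have := ball_concat Hz Hy.
apply/subsetP; apply: ball_mono; apply: hh_step => //.
exact: subset_leq_card.
Qed.

End Up.

Lemma upper_all m p (x y : csr_vertex m p.+2) :
  y \in ball (csr_adj m p.+2) (hh p m) x.
Proof.
have H := upper_gen (leqnn #|Sxy x y|).
apply: (subsetP (ball_mono _ _ (hh_mono p _))) H.
by have := max_card (mem (Sxy x y)); rewrite card_ord.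
Qed.

Theorem theorem5 (m n : nat) (hm : 0 < m) (hn : 0 < n) :
  diameter (csr_adj m n) = m - (m - 1) %/ n - 1.
Proof.
case: n hn => [//|[|p]] _.
  rewrite divn1 (_ : m - (m - 1) - 1 = 0); last by lia.
  apply/eqP; rewrite -leqn0; apply/bigmax_leqP => x _; apply/bigmax_leqP => y _.
  have -> : y = x.
    apply: val_inj; apply/ffunP => i.
    by rewrite (ord1 (sval y i)) (ord1 (sval x i)).
  by apply: gdist_le; rewrite ball0 inE.
case: m hm => [//|m'] _.
have Hh : hh p m'.+1 = m'.+1 - (m'.+1 - 1) %/ p.+2 - 1.
  have -> : m'.+1 - 1 = m' by lia.
  rewrite /hh (_ : m'.+1 + p.+1 = m' + 1 * p.+2); last by lia.
  rewrite divnDMl //; generalize (m' %/ p.+2) => q; lia.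
apply/eqP; rewrite eqn_leq; apply/andP; split.
  apply/bigmax_leqP => x _; apply/bigmax_leqP => y _.
  by rewrite -Hh; apply: gdist_le; apply: upper_all.
apply: leq_trans (leq_bigmax (x0 m'.+1 p)).
apply: leq_trans (leq_bigmax (F := fun y => gdist _ _ y) (y0 m' p)).
rewrite -Hh; apply: gdist_ge; first exact: upper_all.
move=> k Hk; apply/negP => /lower; move: Hk; rewrite Hh.
have -> : m'.+1 - 1 = m' by lia.
generalize (m' %/ p.+2) => q; lia.
Qed.
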